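(* Let $G$ be a countable directed graph and let $x_1\neq x_2$ be vertices of $G$. (a) If $\pi$ is any two-dimensional nest representation of $\mathcal{T}_+(G)$ with $\rho^{(1)}_\pi\in\mathfrak{M}_{G,x_1}$ and $\rho^{(2)}_\pi\in\mathfrak{M}_{G,x_2}$, then there is an edge $e\in\mathcal{E}(G)$ with $s(e)=x_1$ and $r(e)=x_2$. (b) Consequently, $\operatorname{rep}_{x_1,x_2}(\mathcal{T}_+(G))\neq\emptyset$ if and only if there exists an edge $e\in\mathcal{E}(G)$ with $s(e)=x_1$ and $r(e)=x_2$.
   Context: A countable directed graph $G$ has countable vertex set $\mathcal{V}(G)$, edge set $\mathcal{E}(G)$, range and source maps $r,s$. The free semigroupoid $\mathbb{F}^+(G)$ consists of vertices (paths of length $0$) and finite paths $w=e_k\cdots e_1$ with $s(e_i)=r(e_{i-1})$, $s(w)=s(e_1)$, $r(w)=r(e_k)$. On $\ell^2(\mathbb{F}^+(G))$ with orthonormal basis $\{\xi_w\}$, $L_e\xi_w=\xi_{ew}$ if $s(e)=r(w)$ and $0$ otherwise, and $P_v$ is the projection onto $\overline{\operatorname{span}}\{\xi_w:r(w)=v\}$. The tensor algebra $\mathcal{T}_+(G)$ is the norm-closed operator algebra generated by all $L_e$ and $P_v$. $\mathfrak{M}_G$ is the set of characters of $\mathcal{T}_+(G)$ and $\mathfrak{M}_{G,x}=\{\rho\in\mathfrak{M}_G:\rho(P_x)=1\}$. A two-dimensional nest representation is a continuous algebra homomorphism $\pi$ of $\mathcal{T}_+(G)$ onto $\operatorname{Alg}\mathcal{N}$,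 where $\mathcal{H}$ is a 2-dimensional Hilbert space, $\mathcal{N}=\{0,N,I\}$ with $N$ a one-dimensional subspace, and $\operatorname{Alg}\mathcal{N}$ is the algebra of all operators on $\mathcal{H}$ leaving $N$ invariant. Choosing unit vectors $h_2\in N$ and $h_1\in N^\perp$, set $\rho^{(i)}_\pi(A)=\langle\pi(A)h_i,h_i\rangle$, $i=1,2$ (these are characters). For $x_1\neq x_2$, $\operatorname{rep}_{x_1,x_2}(\mathcal{T}_+(G))$ is the set of two-dimensional nest representations $\pi$ with $\rho^{(i)}_\pi\in\mathfrak{M}_{G,x_i}$ for $i=1,2$. *)

(* Defs.v *)
From HB Require Import structures.
From mathcomp Require Import all_boot all_order all_algebra.
From mathcomp Require Import complex.
From mathcomp Require Import boolp classical_sets reals constructive_ereal ereal esum.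

Set Implicit Arguments.
Unset Strict Implicit.
Unset Printing Implicit Defensive.

Import Order.TTheory GRing.Theory Num.Theory.
Local Open Scope ring_scope.

Section GraphAlgebra.
Variables (R : realType) (V E : countType) (r s : E -> V).

Local Notation C := R[i].

(* Indices: a pair (v, [:: e_k; ...; e_1]).  The range of the path is v. *)
Definition idx := (V * seq E)%type.

Definition valid_path (p : idx) : bool :=
  match p.2 with
  | [::] => true
  | e :: t => (r e == p.1) && path (fun a b => s a == r b) e t
  end.

Definition vec := idx -> C.

Definition sqmod (z : C) : R := (@complex.Re R z) ^+ 2 + (@complex.Im R z) ^+ 2.

Definition nrm2 (f : vec) : \bar R := \esum_(p in [set: idx]) (sqmod (f p))%:E.

(* l^2(F^+(G)): square summable functions supported on the paths *)
Definition l2 (f : vec) : Prop :=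
  (forall p, ~~ valid_path p -> f p = 0) /\ (nrm2 f < +oo)%E.

(* operators (only their action on l2 is meaningful) *)
Definition Op := vec -> vec.

Definition opadd (A B : Op) : Op := fun f p => A f p + B f p.
Definition opsub (A B : Op) : Op := fun f p => A f p - B f p.
Definition opscale (a : C) (A : Op) : Op := fun f p => a * A f p.
Definition opcomp (A B : Op) : Op := fun f => A (B f).

Definition opnorm_le (A : Op) (c : R) : Prop :=
  0 <= c /\ forall f, l2 f -> (nrm2 (A f) <= (c ^+ 2)%:E * nrm2 f)%E.

Definition is_op (A : Op) : Prop :=
  [/\ (forall f, l2 f -> l2 (A f)),
      (forall (a : C) f g, l2 f -> l2 g ->
          A (fun p => a * f p + g p) = (fun p => a * A f p + A g p))
    & exists c, opnorm_le A c].

(* L_e xi_w = xi_{ew} if s(e) = r(w), 0 otherwise *)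
Definition Lop (e : E) : Op := fun f p =>
  if valid_path p then
    match p.2 with
    | e' :: t => if e' == e then f (s e, t) else 0
    | [::] => 0
    end
  else 0.

Definition Pop (v : V) : Op := fun f p => if p.1 == v then f p else 0.

Inductive alg0 : Op -> Prop :=
  | alg0_L e : alg0 (Lop e)
  | alg0_P v : alg0 (Pop v)
  | alg0_add A B : alg0 A -> alg0 B -> alg0 (opadd A B)
  | alg0_scale a A : alg0 A -> alg0 (opscale a A)
  | alg0_comp A B : alg0 A -> alg0 B -> alg0 (opcomp A B).

Definition tensor_alg (A : Op) : Prop :=
  is_op A /\ forall eps : R, 0 < eps ->
    exists B, alg0 B /\ exists c, c < eps /\ opnorm_le (opsub A B) c.

Definition character (rho : Op -> C) : Prop :=
  [/\ (forall A B, tensor_alg A -> tensor_alg B -> rho (opadd A B) = rho A + rho B),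
      (forall a A, tensor_alg A -> rho (opscale a A) = a * rho A),
      (forall A B, tensor_alg A -> tensor_alg B -> rho (opcomp A B) = rho A * rho B)
    & exists A, tensor_alg A /\ rho A != 0].

Definition char_at (x : V) (rho : Op -> C) : Prop :=
  character rho /\ rho (Pop x) = 1.

Definition inner (u v : 'cV[C]_2) : C := \sum_(i < 2) u i ord0 * conjc (v i ord0).
Definition unit_vec (h : 'cV[C]_2) : Prop := inner h h = 1.

Definition AlgN (h2 : 'cV[C]_2) (T : 'M[C]_2) : Prop :=
  exists c : C, T *m h2 = c *: h2.

Definition nest_rep (pi : Op -> 'M[C]_2) (h2 : 'cV[C]_2) : Prop :=
  [/\ (forall A B, tensor_alg A -> tensor_alg B -> pi (opadd A B) = pi A + pi B),
      (forall a A, tensor_alg A -> pi (opscale a A) = a *: pi A) &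
   [/\
      (forall A B, tensor_alg A -> tensor_alg B -> pi (opcomp A B) = pi A *m pi B),
      (forall A, tensor_alg A -> forall eps : R, 0 < eps -> exists2 delta : R, 0 < delta &
         forall B, tensor_alg B -> (exists c, c < delta /\ opnorm_le (opsub A B) c) ->
         forall i j, sqmod (pi A i j - pi B i j) < eps),
      (forall A, tensor_alg A -> AlgN h2 (pi A))
    &
      (forall M, AlgN h2 M -> exists A, tensor_alg A /\ pi A = M)]].

Definition rho_pi (pi : Op -> 'M[C]_2) (h : 'cV[C]_2) : Op -> C :=
  fun A => inner (pi A *m h) h.

Definition in_rep (x1 x2 : V) (pi : Op -> 'M[C]_2) (h1 h2 : 'cV[C]_2) : Prop :=
  [/\ unit_vec h1, unit_vec h2, inner h1 h2 = 0 &
   [/\ nest_rep pi h2, char_at x1 (rho_pi pi h1) & char_at x2 (rho_pi pi h2)]].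

End GraphAlgebra.

(* Main.v *)
Require Import Defs.
From HB Require Import structures.
From mathcomp Require Import all_boot all_order all_algebra.
From mathcomp Require Import complex.
From mathcomp Require Import boolp classical_sets reals constructive_ereal ereal esum.
From mathcomp Require Import ring lra fsbigop cardinality.
Set Implicit Arguments. Unset Strict Implicit. Unset Printing Implicit Defensive.
Import Order.TTheory GRing.Theory Num.Theory.
Local Open Scope ring_scope. Local Open Scope complex_scope.


Lemma sqmod_ge0 (R : realType) (z : R[i]) : 0 <= sqmod z.
Proof. rewrite /sqmod; case: z => a b /=; nra. Qed.
Lemma sqmodM (R : realType) (z w : R[i]) : sqmod (z * w) = sqmod z * sqmod w.
Proof. rewrite /sqmod; case: z => a b; case: w => c d /=. ring. Qed.
Lemma sqmodD (R : realType) (z w : R[i]) : sqmod (z + w) <= 2 * sqmod z + 2 * sqmod w.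
Proof. rewrite /sqmod; case: z => a b; case: w => c d /=. have := sqr_ge0 (a - c); have := sqr_ge0 (b - d). nra. Qed.

Lemma esum_single (R : realType) (T : choiceType) (a : T -> \bar R) t :
  (forall x, (0 <= a x)%E) -> (a t <= \esum_(i in [set: T]) a i)%E.
Proof.
move=> a0; apply: esum_ge; exists [set t]%classic; first by split => //; exact: finite_set1.
by rewrite fsbig_set1.
Qed.

Lemma esum_scale (R : realType) (T : choiceType) (S : set T) (c : R) (a : T -> \bar R) :
  0 <= c -> (forall x, (0 <= a x)%E) ->
  (\esum_(i in S) (c%:E * a i) <= c%:E * \esum_(i in S) a i)%E.
Proof.
move=> c0 a0; rewrite ge_ereal_sup => //= _ [X [finX XI]] <-.
rewrite -ge0_mule_fsumr //; apply: lee_wpmul2l; first by rewrite lee_fin.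
by apply: esum_ge; exists X.
Qed.

Lemma nrm2_ge0 (R : realType) (V E : countType) (f : vec R V E) : (0 <= nrm2 f)%E.
Proof. by apply: esum_ge0 => x _; rewrite lee_fin sqmod_ge0. Qed.

Lemma nrm2_fin (R : realType) (V E : countType) (f : vec R V E) :
  (nrm2 f < +oo)%E -> nrm2 f = (fine (nrm2 f))%:E.
Proof. by move=> h; rewrite fineK // ge0_fin_numE // nrm2_ge0. Qed.

Lemma nrm2_lin (R : realType) (V E : countType) (a : R[i]) (f g : vec R V E) :
  (nrm2 (fun p => (a * f p + g p)%R) <= (2 * sqmod a)%:E * nrm2 f + 2%:E * nrm2 g)%E.
Proof.
apply: (@le_trans _ _ (\esum_(p in [set: idx V E])
   ((2 * sqmod a)%:E * (sqmod (f p))%:E + 2%:E * (sqmod (g p))%:E))%E).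
  apply: le_esum => p _; rewrite -!EFinM -EFinD lee_fin.
  apply: le_trans (sqmodD _ _) _; rewrite sqmodM; lra.
rewrite esumD; last 2 first.
- by move=> p _; rewrite -EFinM lee_fin mulr_ge0 // ?mulr_ge0 ?sqmod_ge0.
- by move=> p _; rewrite -EFinM lee_fin mulr_ge0 // ?mulr_ge0 ?sqmod_ge0.
apply: leeD; apply: esum_scale => //; rewrite ?mulr_ge0 ?sqmod_ge0 // => x;
  by rewrite lee_fin sqmod_ge0.
Qed.


Lemma sqmod0 (R : realType) : sqmod (0 : R[i]) = 0.
Proof. rewrite /sqmod /=. ring. Qed.
Lemma sqmod1 (R : realType) : sqmod (1 : R[i]) = 1.
Proof. rewrite /sqmod /=. ring. Qed.

Lemma nrm2_zero (R : realType) (V E : countType) (f : vec R V E) :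
  (forall p, f p = 0) -> nrm2 f = 0%E.
Proof. by move=> h; apply: esum1 => p _; rewrite h sqmod0. Qed.

Lemma l2_lin (R : realType) (V E : countType) (r s : E -> V) (a : R[i]) (f g : vec R V E) :
  l2 r s f -> l2 r s g -> l2 r s (fun p => a * f p + g p).
Proof.
move=> [f0 fn] [g0 gn]; split.
  by move=> p hp; rewrite f0 // g0 // mulr0 addr0.
apply: le_lt_trans (nrm2_lin _ _ _) _.
by rewrite (nrm2_fin fn) (nrm2_fin gn) -!EFinM -EFinD ltry.
Qed.

Definition delta (R : realType) (V E : countType) (w : idx V E) : vec R V E :=
  fun p => if p == w then 1 else 0.

Lemma nrm2_delta (R : realType) (V E : countType) (w : idx V E) :
  nrm2 (delta R w) = 1%E.
Proof.
rewrite /nrm2 (@eq_esum _ _ _ _ (fun p => if p \in [set w]%classic then (sqmod (delta R w p))%:E else 0%E)).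
  rewrite -esum_mkcond esum_set1; last by rewrite lee_fin sqmod_ge0.
  by rewrite /delta eqxx sqmod1.
move=> p _; rewrite /delta; case: (boolP (p \in [set w]%classic)) => //.
move=> h; have hpw : p != w by apply: contra h => /eqP ->; apply/mem_set.
by rewrite (negbTE hpw) sqmod0.
Qed.

Lemma l2_delta (R : realType) (V E : countType) (r s : E -> V) (w : idx V E) :
  valid_path r s w -> l2 r s (delta R w).
Proof.
move=> hw; split; last by rewrite nrm2_delta ltry.
by move=> p hp; rewrite /delta; case: eqP => // e; rewrite e hw in hp.
Qed.

Lemma l2_zero (R : realType) (V E : countType) (r s : E -> V) :
  l2 r s (fun _ : idx V E => 0 : R[i]).
Proof. by split => //; rewrite nrm2_zero // ltry. Qed.


Lemma esum_subT (R : realType) (T : choiceType) (P : set T) (a : T -> \bar R) :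
  (forall x, (0 <= a x)%E) -> (\esum_(i in P) a i <= \esum_(i in [set: T]) a i)%E.
Proof.
move=> a0; rewrite esum_mkcond; apply: le_esum => i _; case: ifP => // _.
Qed.

Lemma nrm2_P (R : realType) (V E : countType) (v : V) (f : vec R V E) :
  (nrm2 (Pop v f) <= nrm2 f)%E.
Proof.
apply: le_esum => p _; rewrite /Pop; case: ifP => // _.
by rewrite sqmod0 lee_fin sqmod_ge0.
Qed.

Lemma nrm2_L (R : realType) (V E : countType) (r s : E -> V) (e : E) (f : vec R V E) :
  (nrm2 (Lop r s e f) <= nrm2 f)%E.
Proof.
pose phi := fun q : idx V E => (r e, e :: q.2).
pose P := [set q : idx V E | q.1 = s e]%classic.
have -> : nrm2 (Lop r s e f) = \esum_(p in (phi @` P)%classic) (sqmod (Lop r s e f p))%:E.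
  rewrite /nrm2 [RHS]esum_mkcond; apply: eq_esum => p _.
  case: (boolP (p \in (phi @` P)%classic)) => // hp.
  move: hp; case: p => v [|e' t] hp; rewrite /Lop /=; first by rewrite ?if_same sqmod0.
  case: ifP => [/andP[hv _]|_]; last by rewrite sqmod0.
  case: (eqVneq e' e) => [Ee|ne]; last by rewrite sqmod0.
  exfalso; move/negP: hp; apply; apply/mem_set; exists (s e, t) => //.
  by rewrite /phi /= -Ee (eqP hv).
rewrite esum_image; last first.
  move=> [a1 b1] [a2 b2] /set_mem h1 /set_mem h2 [] hb.
  by rewrite /P /= in h1 h2; rewrite h1 h2 hb.
apply: le_trans (esum_subT _ _); last by move=> x; rewrite lee_fin sqmod_ge0.
apply: le_esum => [[q1 q2]]; rewrite /P /= => ->.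
rewrite /Lop /= !eqxx /=; case: ifP => _ //.
by rewrite sqmod0 lee_fin sqmod_ge0.
Qed.

Lemma opnorm_of (R : realType) (V E : countType) (r s : E -> V) (A : Op R V E) (k : R) :
  0 <= k -> (forall f, l2 r s f -> (nrm2 (A f) <= k%:E * nrm2 f)%E) ->
  opnorm_le r s A (1 + k).
Proof.
move=> k0 h; split; first lra.
move=> f hf; apply: le_trans (h f hf) _; apply: lee_wpmul2r; first exact: nrm2_ge0.
rewrite lee_fin; nra.
Qed.


Lemma l2_fin (R : realType) (V E : countType) (r s : E -> V) (f : vec R V E) :
  l2 r s f -> nrm2 f = (fine (nrm2 f))%:E /\ 0 <= fine (nrm2 f).
Proof.
move=> [_ h]; have e := nrm2_fin h; split => //.
by have := nrm2_ge0 f; rewrite e lee_fin.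
Qed.

Lemma is_op_P (R : realType) (V E : countType) (r s : E -> V) (v : V) :
  is_op r s (Pop (R:=R) (E:=E) v).
Proof.
split.
- move=> f [f0 fn]; split; first by move=> p hp; rewrite /Pop; case: ifP => // _; exact: f0.
  exact: le_lt_trans (nrm2_P _ _) fn.
- by move=> a f g _ _; apply/funext => p; rewrite /Pop; case: ifP => // _; rewrite mulr0 addr0.
- exists (1 + 1); apply: opnorm_of => // f _; rewrite mul1e; exact: nrm2_P.
Qed.

Lemma is_op_L (R : realType) (V E : countType) (r s : E -> V) (e : E) :
  is_op r s (Lop (R:=R) r s e).
Proof.
split.
- move=> f [f0 fn]; split; first by move=> p hp; rewrite /Lop (negbTE hp).
  exact: le_lt_trans (nrm2_L _ _ _ _) fn.
- move=> a f g _ _; apply/funext => p; rewrite /Lop.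
  case: ifP => _; last by rewrite mulr0 addr0.
  case: p.2 => [|e' t]; first by rewrite mulr0 addr0.
  by case: ifP => // _; rewrite mulr0 addr0.
- exists (1 + 1); apply: opnorm_of => // f _; rewrite mul1e; exact: nrm2_L.
Qed.

Lemma is_op_add (R : realType) (V E : countType) (r s : E -> V) (A B : Op R V E) :
  is_op r s A -> is_op r s B -> is_op r s (opadd A B).
Proof.
move=> [Al Alin [ca [ca0 Ab]]] [Bl Blin [cb [cb0 Bb]]]; split.
- move=> f hf; have := l2_lin 1 (Al f hf) (Bl f hf).
  by rewrite /opadd; under eq_fun do rewrite mul1r.
- move=> a f g hf hg; apply/funext => p; rewrite /opadd Alin // Blin //.
  by rewrite mulrDr -!addrA; congr (_ + _); rewrite addrCA.
- exists (1 + (2 * ca ^+ 2 + 2 * cb ^+ 2)); apply: opnorm_of; first by nra.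
  move=> f hf; have := nrm2_lin 1 (A f) (B f).
  under eq_fun do rewrite mul1r; rewrite /opadd sqmod1 mulr1 => h.
  apply: le_trans h _.
  have := Ab f hf; have := Bb f hf.
  case: (l2_fin (Al f hf)) => -> h1; case: (l2_fin (Bl f hf)) => -> h2.
  case: (l2_fin hf) => -> h3.
  rewrite -!EFinM -!EFinD !lee_fin => hb ha; nra.
Qed.

Lemma is_op_scale (R : realType) (V E : countType) (r s : E -> V) (a : R[i]) (A : Op R V E) :
  is_op r s A -> is_op r s (opscale a A).
Proof.
move=> [Al Alin [ca [ca0 Ab]]]; split.
- move=> f hf; have := l2_lin a (Al f hf) (l2_zero R r s).
  by rewrite /opscale; under eq_fun do rewrite addr0.
- move=> b f g hf hg; apply/funext => p; rewrite /opscale Alin //.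
  by rewrite mulrDr !mulrA [a * b]mulrC.
- exists (1 + (2 * sqmod a * ca ^+ 2)); apply: opnorm_of.
    by have := sqmod_ge0 a; nra.
  move=> f hf; have h := nrm2_lin a (A f) (fun _ => 0).
  rewrite (nrm2_zero (f := fun _ => 0)) // mule0 adde0 in h.
  have e : (fun p => a * A f p + 0) = (fun p => a * A f p) by apply/funext => p; rewrite addr0.
  rewrite e in h.
  rewrite /opscale.
  apply: le_trans h _.
  have := Ab f hf.
  case: (l2_fin (Al f hf)) => -> h1; case: (l2_fin hf) => -> h3.
  have := sqmod_ge0 a.
  rewrite -!EFinM !lee_fin => ha0 ha; nra.
Qed.

Lemma is_op_comp (R : realType) (V E : countType) (r s : E -> V) (A B : Op R V E) :
  is_op r s A -> is_op r s B -> is_op r s (opcomp A B).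
Proof.
move=> [Al Alin [ca [ca0 Ab]]] [Bl Blin [cb [cb0 Bb]]]; split.
- by move=> f hf; apply: Al; apply: Bl.
- by move=> a f g hf hg; rewrite /opcomp Blin // Alin //; apply: Bl.
- exists (1 + (ca ^+ 2 * cb ^+ 2)); apply: opnorm_of; first by nra.
  move=> f hf; rewrite /opcomp.
  have := Ab _ (Bl f hf); have := Bb f hf.
  case: (l2_fin (Al _ (Bl f hf))) => -> h1; case: (l2_fin (Bl f hf)) => -> h2.
  case: (l2_fin hf) => -> h3.
  rewrite -!EFinM !lee_fin => hb ha.
  apply: le_trans ha _. have := ler_wpM2l (sqr_ge0 ca) hb; by rewrite mulrA.
Qed.


Lemma sqmod_eq0 (R : realType) (z : R[i]) : sqmod z = 0 -> z = 0.
Proof. rewrite /sqmod; case: z => a b /= h.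
have ha : a = 0 by nra. have hb : b = 0 by nra. by rewrite ha hb. Qed.

Lemma alg0_is_op (R : realType) (V E : countType) (r s : E -> V) (A : Op R V E) :
  alg0 r s A -> is_op r s A.
Proof.
elim=> {A}.
- exact: is_op_L.
- exact: is_op_P.
- by move=> A B _ hA _ hB; apply: is_op_add.
- by move=> a A _ hA; apply: is_op_scale.
- by move=> A B _ hA _ hB; apply: is_op_comp.
Qed.

Lemma alg0_tensor (R : realType) (V E : countType) (r s : E -> V) (A : Op R V E) :
  alg0 r s A -> tensor_alg r s A.
Proof.
move=> hA; split; first exact: alg0_is_op.
move=> eps he; exists A; split => //; exists 0; split => //; split => // f _.
rewrite nrm2_zero; last by move=> p; rewrite /opsub subrr.
by rewrite expr0n /= mul0e.
Qed.

Lemma approx_zero (R : realType) (V E : countType) (r s : E -> V) (A : Op R V E)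
  (f : vec R V E) (w : idx V E) :
  tensor_alg r s A -> l2 r s f -> (forall B, alg0 r s B -> B f w = 0) -> A f w = 0.
Proof.
move=> [_ hA] hf hB; apply: sqmod_eq0.
have key : forall eps : R, 0 < eps -> sqmod (A f w) <= eps ^+ 2 * fine (nrm2 f).
  move=> eps he; have [B [aB [c [ce [c0 hc]]]]] := hA eps he.
  have h := hc f hf.
  have h2 := @esum_single R _ (fun p => (sqmod (opsub A B f p))%:E) w (fun x => sqmod_ge0 _).
  have ew : opsub A B f w = A f w by rewrite /opsub (hB B aB) subr0.
  rewrite /= ew in h2.
  have h3 := le_trans h2 h.
  case: (l2_fin hf) => e hN; rewrite e -EFinM lee_fin in h3.
  apply: le_trans h3 _; apply: ler_wpM2r => //.
  by rewrite ler_sqr ?nnegrE ?(ltW he) // ltW.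
set t := sqmod (A f w); set N := fine (nrm2 f).
have t0 : 0 <= t by apply: sqmod_ge0.
have N0 : 0 <= N by case: (l2_fin hf).
apply/eqP; rewrite eq_le t0 andbT; apply/negP => /negP; rewrite -ltNge => tp.
pose q := t / (2 * (N + 1)).
have q0 : 0 < q by apply: divr_gt0 => //; nra.
have := key (Num.sqrt q); rewrite sqrtr_gt0 q0 => /(_ isT).
rewrite sqr_sqrtr; last exact: ltW q0.
rewrite -/t -/N /q => h.
have : t / (2 * (N + 1)) * N < t.
  rewrite mulrAC ltr_pdivrMr; last by nra.
  nra.
lra.
Qed.


Lemma ord2P (i : 'I_2) : i = ord0 \/ i = ord_max.
Proof. case: i => [[|[|k]] h]; [left|right|] => //; by apply/val_inj. Qed.
Lemma sum2 (T : nmodType) (F : 'I_2 -> T) : \sum_(i < 2) F i = F ord0 + F ord_max.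
Proof. rewrite big_ord_recr big_ord1 /=. congr (_ + _); congr F; exact: val_inj. Qed.

Lemma alg0_vanish (R : realType) (V E : countType) (r s : E -> V) (ws : seq (idx V E)) :
  (forall e (f : vec R V E), (forall w, w \in ws -> f w = 0) ->
     forall w, w \in ws -> Lop r s e f w = 0) ->
  forall B : Op R V E, alg0 r s B -> forall f, (forall w, w \in ws -> f w = 0) ->
     forall w, w \in ws -> B f w = 0.
Proof.
move=> hL B; elim=> {B}.
- by move=> e f hf w hw; apply: hL.
- by move=> v f hf w hw; rewrite /Pop; case: ifP => // _; apply: hf.
- by move=> A B _ hA _ hB f hf w hw; rewrite /opadd hA // hB // addr0.
- by move=> a A _ hA f hf w hw; rewrite /opscale hA // mulr0.
- by move=> A B _ hA _ hB f hf w hw; rewrite /opcomp; apply: hA => //; apply: hB.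
Qed.

Lemma tensor_vanish (R : realType) (V E : countType) (r s : E -> V) (ws : seq (idx V E))
  (A : Op R V E) (f : vec R V E) :
  (forall e (f : vec R V E), (forall w, w \in ws -> f w = 0) ->
     forall w, w \in ws -> Lop r s e f w = 0) ->
  tensor_alg r s A -> l2 r s f -> (forall w, w \in ws -> f w = 0) ->
  forall w, w \in ws -> A f w = 0.
Proof.
move=> hL hA hf hz w hw; apply: (approx_zero (r:=r) (s:=s)) => // B hB.
exact: alg0_vanish hL B hB f hz w hw.
Qed.

Definition Wb (V E : countType) (x1 x2 : V) (e0 : E) (i : 'I_2) : idx V E :=
  if i == ord0 then (x1, [::]) else (x2, [:: e0]).

Definition piB (R : realType) (V E : countType) (x1 x2 : V) (e0 : E) (A : Op R V E) : 'M[R[i]]_2 :=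
  \matrix_(i, j) A (delta R (Wb x1 x2 e0 j)) (Wb x1 x2 e0 i).

Lemma Wb_valid (V E : countType) (r s : E -> V) (x1 x2 : V) (e0 : E) i :
  r e0 = x2 -> valid_path r s (Wb x1 x2 e0 i).
Proof. by move=> hr; rewrite /Wb; case: ifP => _ //=; rewrite /valid_path /= hr eqxx. Qed.

Lemma Wb_delta (R : realType) (V E : countType) (x1 x2 : V) (e0 : E) i j :
  delta R (Wb x1 x2 e0 j) (Wb x1 x2 e0 i) = if i == j then 1 else 0.
Proof.
rewrite /delta /Wb; case: (ord2P i) => ->; case: (ord2P j) => -> //=; by rewrite ?eqxx // xpair_eqE andbF.
Qed.

Lemma Lop_w1 (R : realType) (V E : countType) (r s : E -> V) e (f : vec R V E) (x1 : V) :
  Lop r s e f (x1, [::]) = 0.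
Proof. by rewrite /Lop /= ?if_same. Qed.

Lemma Lop_w2 (R : realType) (V E : countType) (r s : E -> V) e (f : vec R V E) (x1 x2 : V) e0 :
  s e0 = x1 -> f (x1, [::]) = 0 -> Lop r s e f (x2, [:: e0]) = 0.
Proof.
move=> hs h; rewrite /Lop /=; case: ifP => // _; case: eqP => // <-.
by rewrite hs.
Qed.

Lemma hL1 (R : realType) (V E : countType) (r s : E -> V) (x1 : V) :
  forall e (f : vec R V E), (forall w, w \in [:: (x1, [::])] -> f w = 0) ->
     forall w, w \in [:: (x1, [::])] -> Lop r s e f w = 0.
Proof. by move=> e f _ w; rewrite inE => /eqP ->; apply: Lop_w1. Qed.

Lemma hL12 (R : realType) (V E : countType) (r s : E -> V) (x1 x2 : V) e0 :
  s e0 = x1 ->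
  forall e (f : vec R V E), (forall w, w \in [:: (x1, [::]); (x2, [:: e0])] -> f w = 0) ->
     forall w, w \in [:: (x1, [::]); (x2, [:: e0])] -> Lop r s e f w = 0.
Proof.
move=> hs e f hf w; rewrite !inE => /orP[/eqP ->|/eqP ->]; first exact: Lop_w1.
by apply: (@Lop_w2 R V E r s e f x1) => //; apply: hf; rewrite mem_head.
Qed.


Lemma Wb0 (V E : countType) (x1 x2 : V) (e0 : E) : Wb x1 x2 e0 ord0 = (x1, [::]).
Proof. by []. Qed.
Lemma Wb1 (V E : countType) (x1 x2 : V) (e0 : E) : Wb x1 x2 e0 ord_max = (x2, [:: e0]).
Proof. by []. Qed.

Lemma Wb_in (V E : countType) (x1 x2 : V) (e0 : E) i :
  Wb x1 x2 e0 i \in [:: (x1, [::]); (x2, [:: e0])].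
Proof. by case: (ord2P i) => ->; rewrite !inE eqxx ?orbT. Qed.

Lemma piB_01 (R : realType) (V E : countType) (r s : E -> V) (x1 x2 : V) (e0 : E)
  (A : Op R V E) : r e0 = x2 -> tensor_alg r s A -> piB x1 x2 e0 A ord0 ord_max = 0.
Proof.
move=> hr hA; rewrite mxE.
apply: (tensor_vanish (ws := [:: (x1, [::])]) (@hL1 R V E r s x1) hA).
- by apply: l2_delta; apply: Wb_valid.
- by move=> w; rewrite inE => /eqP ->; rewrite -(Wb0 x1 x2 e0) Wb_delta.
- by rewrite Wb0 mem_head.
Qed.

Lemma piB_mul (R : realType) (V E : countType) (r s : E -> V) (x1 x2 : V) (e0 : E)
  (A B : Op R V E) : s e0 = x1 -> r e0 = x2 -> tensor_alg r s A -> tensor_alg r s B ->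
  piB x1 x2 e0 (opcomp A B) = piB x1 x2 e0 A *m piB x1 x2 e0 B.
Proof.
move=> hs hr hA hB; apply/matrixP => i j; rewrite !mxE sum2 !mxE /opcomp.
have [[Al Alin _] _] := (hA : is_op r s A /\ _); have [[Bl _ _] _] := (hB : is_op r s B /\ _).
have ld : forall k, l2 r s (delta R (Wb x1 x2 e0 k)).
  by move=> k; apply: l2_delta; apply: Wb_valid.
set d0 := delta R (Wb x1 x2 e0 ord0); set d1 := delta R (Wb x1 x2 e0 ord_max).
set g := B (delta R (Wb x1 x2 e0 j)).
have lg : l2 r s g by apply: Bl.
set c0 := g (Wb x1 x2 e0 ord0); set c1 := g (Wb x1 x2 e0 ord_max).
pose m := fun p => - c0 * d0 p + (- c1 * d1 p + g p).
have lm : l2 r s m by rewrite /m; apply: l2_lin; [apply: ld|apply: l2_lin; [apply: ld|exact: lg]].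
have eg : g = fun p => c0 * d0 p + (c1 * d1 p + m p).
  by apply/funext => p; rewrite /m; ring.
have Ag : A g = fun p => c0 * A d0 p + (c1 * A d1 p + A m p).
  rewrite {1}eg Alin; [|exact: ld|apply: l2_lin; [exact: ld|exact: lm]].
  rewrite Alin; [done|exact: ld|exact: lm].
have hm : forall w, w \in [:: (x1, [::]); (x2, [:: e0])] -> m w = 0.
  move=> w; rewrite !inE => /orP[] /eqP ->.
    rewrite -(Wb0 x1 x2 e0) /m /d0 /d1 !Wb_delta /= /c0 Wb0; ring.
  rewrite -(Wb1 x1 x2 e0) /m /d0 /d1 !Wb_delta /= /c1 Wb1; ring.
rewrite Ag (tensor_vanish (@hL12 R V E r s x1 x2 e0 hs) hA lm hm) ?Wb_in //.
rewrite /c0 /c1; ring.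
Qed.


Lemma inner_delta (R : realType) (X : 'M[R[i]]_2) k :
  inner (X *m delta_mx k ord0) (delta_mx k ord0) = X k k.
Proof.
rewrite /inner sum2 !mxE !sum2 !mxE.
have c1 : (1 -i* 0) = 1 :> R[i] by rewrite oppr0.
have c0 : ((- 0)*i) = 0 :> R[i] by rewrite oppr0.
by case: (ord2P k) => -> /=; rewrite c0 c1; ring.
Qed.

Lemma inner_dd (R : realType) (k l : 'I_2) :
  inner (delta_mx k ord0) (delta_mx l ord0) = if k == l then 1 else 0 :> R[i].
Proof.
rewrite /inner sum2 !mxE.
have c1 : (1 -i* 0) = 1 :> R[i] by rewrite oppr0.
have c0 : ((- 0)*i) = 0 :> R[i] by rewrite oppr0.
by case: (ord2P k) => ->; case: (ord2P l) => -> /=; rewrite ?c0 ?c1; ring.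
Qed.

Lemma piB_cont (R : realType) (V E : countType) (r s : E -> V) (x1 x2 : V) (e0 : E)
  (A : Op R V E) : r e0 = x2 ->
  forall eps : R, 0 < eps -> exists2 delta : R, 0 < delta &
    forall B, tensor_alg r s B -> (exists c, c < delta /\ opnorm_le r s (opsub A B) c) ->
    forall i j, sqmod (piB x1 x2 e0 A i j - piB x1 x2 e0 B i j) < eps.
Proof.
move=> hr eps he; exists (Num.min 1 eps); first by rewrite lt_min ltr01 he.
move=> B _ [c [hc [c0 hb]]] i j; rewrite !mxE.
have ld : l2 r s (delta R (Wb x1 x2 e0 j)) by apply: l2_delta; apply: Wb_valid.
have h := hb _ ld; rewrite nrm2_delta mule1 in h.
have h2 := @esum_single R _ (fun p => (sqmod (opsub A B (delta R (Wb x1 x2 e0 j)) p))%:E)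
   (Wb x1 x2 e0 i) (fun x => sqmod_ge0 _).
have := le_trans h2 h; rewrite lee_fin /opsub => h3.
move: hc; rewrite lt_min => /andP[c1 ce]; nra.
Qed.

Lemma piB_algN (R : realType) (V E : countType) (r s : E -> V) (x1 x2 : V) (e0 : E)
  (A : Op R V E) : r e0 = x2 -> tensor_alg r s A ->
  AlgN (delta_mx ord_max ord0) (piB x1 x2 e0 A).
Proof.
move=> hr hA; exists (piB x1 x2 e0 A ord_max ord_max).
have h01 := piB_01 x1 hr hA; rewrite mxE in h01.
apply/matrixP => i j; rewrite (ord1 j) !mxE sum2 !mxE.
case: (ord2P i) => ->; rewrite ?h01 /=; ring.
Qed.

Lemma piB_onto (R : realType) (V E : countType) (r s : E -> V) (x1 x2 : V) (e0 : E)
  (M : 'M[R[i]]_2) : x1 != x2 -> s e0 = x1 -> r e0 = x2 ->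
  AlgN (delta_mx ord_max ord0) M -> exists A, tensor_alg r s A /\ piB x1 x2 e0 A = M.
Proof.
move=> hx hs hr [c hc].
have M01 : M ord0 ord_max = 0.
  have := congr1 (fun X : 'M[R[i]]_(2,1) => X ord0 ord0) hc; rewrite /= !mxE sum2 !mxE /=.
  by rewrite !mulr0 mulr1 add0r.
exists (opadd (opscale (M ord0 ord0) (Pop x1))
   (opadd (opscale (M ord_max ord_max) (Pop x2)) (opscale (M ord_max ord0) (Lop r s e0)))).
split; first by apply: alg0_tensor; do ! constructor.
apply/matrixP => i j; rewrite mxE /opadd /opscale /Pop /Lop /delta.
case: (ord2P i) => ->; case: (ord2P j) => -> /=.
all: have n12 : (x1 == x2) = false by apply: negbTE.
all: have n21 : (x2 == x1) = false by rewrite eq_sym.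
all: have w12 : ((x1, [::]) == (x2, [:: e0])) = false by rewrite xpair_eqE andbF.
all: have w21 : ((x2, [:: e0]) == (x1, [::])) = false by rewrite xpair_eqE andbF.
all: have vw : valid_path r s (x2, [:: e0]) by rewrite /valid_path /= hr eqxx.
all: rewrite ?Wb0 ?Wb1 ?vw ?eqxx ?n12 ?n21 ?w12 ?w21 ?hs ?eqxx ?w12 ?M01 /=; ring.
Qed.


Lemma part_b (R : realType) (V E : countType) (r s : E -> V) (x1 x2 : V) (e0 : E) :
  x1 != x2 -> s e0 = x1 -> r e0 = x2 ->
  exists (pi : Op R V E -> 'M[R[i]]_2) (h1 h2 : 'cV[R[i]]_2), in_rep r s x1 x2 pi h1 h2.
Proof.
move=> hx hs hr.
have m00 : forall A B : Op R V E, tensor_alg r s A -> tensor_alg r s B ->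
   piB x1 x2 e0 (opcomp A B) ord0 ord0 = piB x1 x2 e0 A ord0 ord0 * piB x1 x2 e0 B ord0 ord0.
  move=> A B hA hB; rewrite (piB_mul (r:=r) (s:=s)) //.
  have h := piB_01 x1 hr hA; rewrite mxE in h.
  rewrite !mxE sum2 !mxE h; ring.
have m11 : forall A B : Op R V E, tensor_alg r s A -> tensor_alg r s B ->
   piB x1 x2 e0 (opcomp A B) ord_max ord_max =
   piB x1 x2 e0 A ord_max ord_max * piB x1 x2 e0 B ord_max ord_max.
  move=> A B hA hB; rewrite (piB_mul (r:=r) (s:=s)) //.
  have h := piB_01 x1 hr hB; rewrite mxE in h.
  rewrite !mxE sum2 !mxE h; ring.
exists (piB x1 x2 e0), (delta_mx ord0 ord0), (delta_mx ord_max ord0).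
split.
- by rewrite /unit_vec inner_dd eqxx.
- by rewrite /unit_vec inner_dd eqxx.
- by rewrite inner_dd.
split.
- split.
  + by move=> A B _ _; apply/matrixP => i j; rewrite !mxE.
  + by move=> a A _; apply/matrixP => i j; rewrite !mxE.
  split.
  + by move=> A B hA hB; exact: (piB_mul hs hr hA hB).
  + by move=> A _; exact: (@piB_cont R V E r s x1 x2 e0 A hr).
  + by move=> A hA; exact: (piB_algN x1 hr hA).
  + by move=> M hM; exact: (piB_onto (r:=r) (s:=s) hx hs hr hM).
- split; last by rewrite /rho_pi inner_delta mxE /Pop /= eqxx Wb_delta.
  split.
  + by move=> A B _ _; rewrite /rho_pi !inner_delta !mxE.
  + by move=> a A _; rewrite /rho_pi !inner_delta !mxE.
  + by move=> A B hA hB; rewrite /rho_pi !inner_delta m00.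
  + exists (Pop x1); split; first by apply: alg0_tensor; constructor.
    by rewrite /rho_pi inner_delta mxE /Pop /= eqxx Wb_delta oner_neq0.
- split; last by rewrite /rho_pi inner_delta mxE /Pop /= eqxx Wb_delta.
  split.
  + by move=> A B _ _; rewrite /rho_pi !inner_delta !mxE.
  + by move=> a A _; rewrite /rho_pi !inner_delta !mxE.
  + by move=> A B hA hB; rewrite /rho_pi !inner_delta m11.
  + exists (Pop x2); split; first by apply: alg0_tensor; constructor.
    by rewrite /rho_pi inner_delta mxE /Pop /= eqxx Wb_delta oner_neq0.
Qed.

Import Normc.

Lemma normc_ge0 (R : realType) (z : R[i]) : 0 <= normc z.
Proof. by case: z => a b /=; apply: sqrtr_ge0. Qed.

Lemma normc_sq (R : realType) (z : R[i]) : normc z ^+ 2 = sqmod z.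
Proof. case: z => a b /=; rewrite sqr_sqrtr // /sqmod /=; nra. Qed.

Lemma normc_lt (R : realType) (z : R[i]) (d : R) : 0 < d -> sqmod z < d ^+ 2 -> normc z < d.
Proof.
move=> d0; rewrite -normc_sq => h; have := normc_ge0 z => n0.
rewrite ltNge; apply/negP => hd; move: h; rewrite ltNge => /negP; apply.
nra.
Qed.

Lemma small_entry (R : realType) (K1 K2 : 'M[R[i]]_2) :
  exists2 eps : R, 0 < eps & forall D : 'M_2, (forall k l, sqmod (D k l) < eps) ->
    (K1 *m D *m K2) ord_max ord0 != 1.
Proof.
set a00 := normc (K1 ord_max ord0) * normc (K2 ord0 ord0).
set a01 := normc (K1 ord_max ord0) * normc (K2 ord_max ord0).
set a10 := normc (K1 ord_max ord_max) * normc (K2 ord0 ord0).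
set a11 := normc (K1 ord_max ord_max) * normc (K2 ord_max ord0).
have ha : forall x y : R[i], 0 <= normc x * normc y.
  by move=> x y; apply: mulr_ge0; apply: normc_ge0.
set T := a00 + a01 + a10 + a11.
have T0 : 0 <= T by rewrite /T /a00 /a01 /a10 /a11; have := ha (K1 ord_max ord0) (K2 ord0 ord0);
  have := ha (K1 ord_max ord0) (K2 ord_max ord0); have := ha (K1 ord_max ord_max) (K2 ord0 ord0);
  have := ha (K1 ord_max ord_max) (K2 ord_max ord0); lra.
set d := (T + 1)^-1.
have d0 : 0 < d by rewrite invr_gt0; lra.
exists (d ^+ 2); first by apply: exprn_gt0.
move=> D hD; apply/negP => /eqP h1.
have hn : forall k l, normc (D k l) < d by move=> k l; apply: normc_lt.
have e : (K1 *m D *m K2) ord_max ord0 =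
   K1 ord_max ord0 * D ord0 ord0 * K2 ord0 ord0 + K1 ord_max ord0 * D ord0 ord_max * K2 ord_max ord0 +
  (K1 ord_max ord_max * D ord_max ord0 * K2 ord0 ord0 + K1 ord_max ord_max * D ord_max ord_max * K2 ord_max ord0).
  rewrite !mxE !sum2 !mxE !sum2; ring.
have := normc1 R; rewrite -h1 e => hN.
have tri : forall x y z : R[i], normc (x * y * z) = normc x * normc z * normc y.
  by move=> x y z; rewrite !normcM; ring.
have : normc (K1 ord_max ord0 * D ord0 ord0 * K2 ord0 ord0 + K1 ord_max ord0 * D ord0 ord_max * K2 ord_max ord0 +
  (K1 ord_max ord_max * D ord_max ord0 * K2 ord0 ord0 + K1 ord_max ord_max * D ord_max ord_max * K2 ord_max ord0))
  <= a00 * d + a01 * d + (a10 * d + a11 * d).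
  apply: le_trans (le_normcD _ _) _; apply: lerD; apply: le_trans (le_normcD _ _) _;
  rewrite !tri; apply: lerD; apply: ler_wpM2l; rewrite ?ha // ltW //.
have : a00 * d + a01 * d + (a10 * d + a11 * d) = T * d by rewrite /T; ring.
have : T * d < 1 by rewrite /d ltr_pdivrMr; lra.
lra.
Qed.


Definition Hm (R : realType) (h1 h2 : 'cV[R[i]]_2) : 'M[R[i]]_2 :=
  \matrix_(i, j) (if j == ord0 then h1 i ord0 else h2 i ord0).
Definition Um (R : realType) (H : 'M[R[i]]_2) : 'M[R[i]]_2 := \matrix_(i, j) conjc (H j i).

Lemma sigmaE (R : realType) (H X : 'M[R[i]]_2) i j :
  (Um H *m X *m H) i j = inner (X *m col j H) (col i H).
Proof. rewrite /inner !mxE !sum2 !mxE !sum2 !mxE; ring. Qed.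

Lemma colH0 (R : realType) (h1 h2 : 'cV[R[i]]_2) : col ord0 (Hm h1 h2) = h1.
Proof. by apply/matrixP => i j; rewrite !mxE (ord1 j). Qed.
Lemma colH1 (R : realType) (h1 h2 : 'cV[R[i]]_2) : col ord_max (Hm h1 h2) = h2.
Proof. by apply/matrixP => i j; rewrite !mxE (ord1 j). Qed.

Lemma inner_conj (R : realType) (u v : 'cV[R[i]]_2) : inner v u = conjc (inner u v).
Proof.
rewrite /inner rmorph_sum; apply: eq_bigr => k _.
by rewrite rmorphM /= conjcK mulrC.
Qed.

Lemma inner_scalel (R : realType) (c : R[i]) (u v : 'cV[R[i]]_2) :
  inner (c *: u) v = c * inner u v.
Proof. by rewrite /inner mulr_sumr; apply: eq_bigr => k _; rewrite !mxE mulrA. Qed.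

Lemma UH1 (R : realType) (h1 h2 : 'cV[R[i]]_2) :
  unit_vec h1 -> unit_vec h2 -> inner h1 h2 = 0 ->
  Um (Hm h1 h2) *m Hm h1 h2 = 1%:M.
Proof.
move=> u1 u2 o12; apply/matrixP => i j.
have := sigmaE (Hm h1 h2) 1%:M i j; rewrite mulmx1 mul1mx => ->.
rewrite mxE; case: (ord2P i) => ->; case: (ord2P j) => ->;
  rewrite ?colH0 ?colH1 //=.
by rewrite inner_conj o12 /= oppr0.
Qed.


Lemma part_a (R : realType) (V E : countType) (r s : E -> V) (x1 x2 : V)
  (pi : Op R V E -> 'M[R[i]]_2) (h1 h2 : 'cV[R[i]]_2) :
  x1 != x2 -> in_rep r s x1 x2 pi h1 h2 -> exists e : E, s e = x1 /\ r e = x2.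
Proof.
move=> hx [u1 u2 o12 [[padd pscale [pmul pcont palg ponto]]
  [[r1add r1sc r1mul _] r1P] [[r2add r2sc r2mul _] r2P]]].
apply: contrapT => noE.
set H := Hm h1 h2; set U := Um H.
have UH : U *m H = 1%:M by apply: UH1.
have HU : H *m U = 1%:M by apply: mulmx1C.
pose S := fun A => U *m pi A *m H.
have Smul : forall A B, tensor_alg r s A -> tensor_alg r s B -> S (opcomp A B) = S A *m S B.
  move=> A B hA hB; rewrite /S pmul // !mulmxA.
  by rewrite -(mulmxA (U *m pi A) H U) HU mulmx1.
have Sadd : forall A B, tensor_alg r s A -> tensor_alg r s B -> S (opadd A B) = S A + S B.
  by move=> A B hA hB; rewrite /S padd // mulmxDr mulmxDl.
have Sscale : forall a A, tensor_alg r s A -> S (opscale a A) = a *: S A.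
  by move=> a A hA; rewrite /S pscale // -scalemxAr -scalemxAl.
have S01 : forall A, tensor_alg r s A -> S A ord0 ord_max = 0.
  move=> A hA; rewrite /S sigmaE colH0 colH1.
  have [c ->] := palg A hA.
  by rewrite inner_scalel inner_conj o12 /= oppr0 mulr0.
have S00 : forall A, S A ord0 ord0 = rho_pi pi h1 A by move=> A; rewrite /S sigmaE colH0.
have S11 : forall A, S A ord_max ord_max = rho_pi pi h2 A by move=> A; rewrite /S sigmaE colH1.
have tP : forall v, tensor_alg r s (Pop (R:=R) (E:=E) v).
  by move=> v; apply: alg0_tensor; constructor.
pose Z := opscale 0 (Pop (R:=R) (E:=E) x1).
have SZ : S Z = 0 by rewrite Sscale // scale0r.
have PP : forall v w, v != w -> opcomp (Pop v) (Pop w) = Z.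
  move=> v w hvw; apply/funext => f; apply/funext => p.
  rewrite /opcomp /Pop /Z /opscale mul0r.
  case: eqP => // hv; case: eqP => // hw.
  by move: hvw; rewrite -hv -hw eqxx.
have hx' : x2 != x1 by rewrite eq_sym.
have r2P1 : rho_pi pi h2 (Pop x1) = 0.
  have := r2mul (Pop x1) (Pop x2) (tP _) (tP _).
  by rewrite PP // r2sc // r2P mulr1 mul0r.
have r1P2 : rho_pi pi h1 (Pop x2) = 0.
  have := r1mul (Pop x2) (Pop x1) (tP _) (tP _).
  by rewrite PP // r1sc // r1P !mulr1 ?mul0r => <-.
pose Q1 := S (Pop x1); pose Q2 := S (Pop x2).
have QQ : Q2 *m Q1 = 0 by rewrite /Q1 /Q2 -Smul // PP.
have q1 : Q1 ord0 ord0 = 1 by rewrite /Q1 S00 r1P.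
have q2 : Q1 ord_max ord_max = 0 by rewrite /Q1 S11 r2P1.
have q3 : Q2 ord0 ord0 = 0 by rewrite /Q2 S00 r1P2.
have q4 : Q2 ord_max ord_max = 1 by rewrite /Q2 S11 r2P.
have q5 : Q1 ord0 ord_max = 0 by rewrite /Q1 S01.
have q6 : Q2 ord0 ord_max = 0 by rewrite /Q2 S01.
have Qsum : Q1 + Q2 = 1%:M.
  have e := congr1 (fun X : 'M[R[i]]_2 => X ord_max ord0) QQ.
  rewrite /= !mxE sum2 q1 q4 mulr1 mul1r in e.
  apply/matrixP => i j; rewrite [in LHS]mxE [in RHS]mxE.
  case: (ord2P i) => ->; case: (ord2P j) => -> /=.
  - by rewrite q1 q3 addr0.
  - by rewrite q5 q6 addr0.
  - by rewrite addrC e.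
  - by rewrite q2 q4 add0r.
have eQ1 : Q1 = S (Pop x1) by [].
have eQ2 : Q2 = S (Pop x2) by [].
have eS : forall A, S A = U *m pi A *m H by [].
clearbody Q1 Q2 S.
have claim : forall B, alg0 r s B -> Q2 *m S B *m Q1 = 0.
  move=> B0; elim=> {B0}.
  - move=> e; rewrite eQ1 eQ2 -!Smul //; try by apply: alg0_tensor; do ! constructor.
    have -> : opcomp (opcomp (Pop x2) (Lop r s e)) (Pop x1) = Z.
      apply/funext => f; apply/funext => [[v t]].
      rewrite /opcomp /Pop /Lop /Z /opscale mul0r /=.
      case: eqP => // hv; case: ifP => // hval; case: t hval => [|e' t] hval //.
      case: eqP => // he; rewrite /=; case: eqP => // hs'.
      exfalso; apply: noE; exists e; split => //.
      by move: hval; rewrite /valid_path /= -he -hv => /andP[/eqP].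
    exact: SZ.
  - move=> v; rewrite eQ1 eQ2 -!Smul //; try by apply: alg0_tensor; do ! constructor.
    have -> : opcomp (opcomp (Pop x2) (Pop v)) (Pop x1) = Z.
      apply/funext => f; apply/funext => p.
      rewrite /opcomp /Pop /Z /opscale mul0r.
      case: eqP => // h2'; case: eqP => // _; case: eqP => // h1'.
      by move: hx; rewrite -h1' h2' eqxx.
    exact: SZ.
  - move=> A B hA IA hB IB.
    rewrite Sadd; [|exact: alg0_tensor hA|exact: alg0_tensor hB].
    by rewrite mulmxDr mulmxDl IA IB addr0.
  - move=> a A hA IA.
    rewrite Sscale; last exact: alg0_tensor hA.
    by rewrite -scalemxAr -scalemxAl IA scaler0.
  - move=> A B hA IA hB IB.
    rewrite Smul; [|exact: alg0_tensor hA|exact: alg0_tensor hB].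
    have -> : S A *m S B = S A *m (Q1 + Q2) *m S B by rewrite Qsum mulmx1.
    rewrite (mulmxDr (S A)) (mulmxDl (S A *m Q1)) (mulmxDr Q2) (mulmxDl _ _ Q1).
    have -> : Q2 *m (S A *m Q1 *m S B) *m Q1 = (Q2 *m S A *m Q1) *m S B *m Q1 by rewrite !mulmxA.
    have -> : Q2 *m (S A *m Q2 *m S B) *m Q1 = Q2 *m S A *m (Q2 *m S B *m Q1) by rewrite !mulmxA.
    by rewrite IA IB mulmx0 !mul0mx addr0.
pose Em : 'M[R[i]]_2 := delta_mx ord_max ord0.
have hM : AlgN h2 (H *m Em *m U).
  exists 0; rewrite scale0r.
  have -> : h2 = H *m delta_mx ord_max ord0 by rewrite -colE colH1.
  rewrite -!mulmxA (mulmxA U H) UH mul1mx /Em mul_delta_mx_cond /=.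
  by rewrite mulr0n mulmx0.
have [A [tA piA]] := ponto _ hM.
have SA : S A = Em by rewrite eS piA !mulmxA UH mul1mx -mulmxA UH mulmx1.
have one : (Q2 *m S A *m Q1) ord_max ord0 = 1.
  rewrite SA /Em !mxE !sum2 !mxE !sum2 !mxE /= q4 q1; ring.
have [eps ep hsmall] := small_entry (Q2 *m U) (H *m Q1).
have [dl dl0 hc] := pcont A tA eps ep.
have [_ happ] := tA.
have [B [aB [c [cdl hopn]]]] := happ dl dl0.
have hD := hc B (alg0_tensor aB) (ex_intro _ c (conj cdl hopn)).
have hsm : forall k l, sqmod ((pi A - pi B) k l) < eps.
  by move=> k l; rewrite !mxE; apply: hD.
have hne := hsmall (pi A - pi B) hsm.
have e : Q2 *m U *m (pi A - pi B) *m (H *m Q1) = Q2 *m S A *m Q1 - Q2 *m S B *m Q1.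
  by rewrite !eS mulmxBr mulmxBl !mulmxA.
by rewrite e (claim B aB) subr0 one eqxx in hne.
Qed.

Theorem theorem2p6 (R : realType) (V E : countType) (r s : E -> V) (x1 x2 : V) :
  x1 != x2 ->
  (forall (pi : Op R V E -> 'M[R[i]]_2) (h1 h2 : 'cV[R[i]]_2),
      in_rep r s x1 x2 pi h1 h2 -> exists e : E, s e = x1 /\ r e = x2) /\
  ((exists (pi : Op R V E -> 'M[R[i]]_2) (h1 h2 : 'cV[R[i]]_2),
      in_rep r s x1 x2 pi h1 h2) <-> exists e : E, s e = x1 /\ r e = x2).
Proof.
move=> hx; split.
  by move=> pi h1 h2 hrep; apply: (part_a hx hrep).
split; first by move=> [pi [h1 [h2 hrep]]]; apply: (part_a hx hrep).
by move=> [e [hs hr]]; apply: (part_b R hx hs hr).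
Qed.
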